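(* Let $(P,<)$ be a finite graded poset with rank function $\rho$, and let $w:P\to\mathbb{R}$ be a weight function. Let $G$ be the graph with vertex set $P$ having an edge between $x$ and $y$ if and only if $x\lessdot y$ or $y\lessdot x$; an edge $\{x,y\}$ with $x\lessdot y$ is given weight $w(y)$. Then the maximum score attainable by a legal move sequence in the generalized taxman game on $(P,<,w)$ equals the maximum weight of a matching of $G$ that contains no flat alternating cycle. More precisely, legal move sequences correspond to flat-alternating-cycle-free matchings of $G$ in such a way that the score of the move sequence equals the weight of the matching: from a legal move sequence $p_1,\dots,p_n$ one obtains such a matching $\{(q_i,p_i)\}$ with $q_i\lessdot p_i$, where $q_i$ is a maximal element among those removed by the taxman in move $i$; and conversely, for every flat-alternating-cycle-free matching $\{(x_i,y_i)\}$ with $x_i\lessdot y_i$, the elements $y_i$ can be ordered so as to form a legal move sequence whose score is $\sum_i w(y_i)$.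
   Context: A strict partial order $(P,<)$ is irreflexive, transitive and asymmetric. For $p,q\in P$, $p$ covers $q$, written $q\lessdot p$, if $q<p$ and there is no $x\in P$ with $q<x<p$. A graded poset is a poset $(P,<)$ with a rank function $\rho:P\to\mathbb{N}$ such that $q<p$ implies $\rho(q)<\rho(p)$ and $q\lessdot p$ implies $\rho(p)=\rho(q)+1$. The generalized taxman game on $(P,<,w)$, with $P$ finite and $w:P\to\mathbb{R}$: initially all elements of $P$ are in play. A move consists of picking an element $p$ still in play such that some $q<p$ is still in play (a legal pick); the player gains $w(p)$ points, $p$ is removed, and the taxman removes all elements $a<p$ still in play. A legal move sequence is a finite sequence of legal picks made in succession; its score is the sum of the weights of the picked elements. When no legal picks remain, the taxman claims all remaining elements. For a graph $G$ whose vertex set is a graded poset, a matching is a set of edges no two sharing an endpoint. A cycle is alternating (with respect to a matching) if exactly every other edge of the cycle lies in the matching. A cycle is flat if there is an integer $n$ such that all its vertices have rank $n$ or $n+1$. *)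

(* Defs.v *)
From mathcomp Require Import all_boot all_order all_algebra.
Set Implicit Arguments. Unset Strict Implicit. Unset Printing Implicit Defensive.
Import Order.TTheory GRing.Theory Num.Theory.

Section Taxman.
Variables (T : finType) (lt : rel T).

Definition covers (q p : T) : bool :=
  lt q p && [forall x, ~~ (lt q x && lt x p)].

Definition graded (rho : T -> nat) : Prop :=
  (forall q p, lt q p -> rho q < rho p)%N /\
  (forall q p, covers q p -> rho p = (rho q).+1).

Definition taxed_set (S : {set T}) (p : T) : {set T} := [set a in S | lt a p].

Definition step (S : {set T}) (p : T) : {set T} := (S :\ p) :\: taxed_set S p.

Definition legal_pick (S : {set T}) (p : T) : bool :=
  (p \in S) && [exists q in S, lt q p].

Fixpoint legal_from (S : {set T}) (s : seq T) : bool :=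
  if s is p :: s' then legal_pick S p && legal_from (step S p) s' else true.

Definition legal (s : seq T) : bool := legal_from [set: T] s.

Definition state_after (s : seq T) : {set T} := foldl step [set: T] s.

Definition taxed (s1 : seq T) (p : T) : {set T} := taxed_set (state_after s1) p.

Definition maximal_in (a : T) (X : {set T}) : Prop :=
  a \in X /\ (forall b, b \in X -> ~~ lt a b).

Definition adj (x y : T) : bool := covers x y || covers y x.

(* A matching of G: an edge {x,y} with x covered by y is stored as the pair (x,y). *)
Definition is_matching (M : {set T * T}) : Prop :=
  (forall e, e \in M -> covers e.1 e.2) /\
  (forall e f, e \in M -> f \in M -> e != f ->
     [/\ e.1 != f.1, e.1 != f.2, e.2 != f.1 & e.2 != f.2]).

Definition in_matching (M : {set T * T}) (x y : T) : bool :=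
  ((x, y) \in M) || ((y, x) \in M).

Definition is_cycle (c : seq T) : bool :=
  [&& uniq c, (2 < size c)%N & cycle adj c].

Definition cycle_edges (c : seq T) : seq (T * T) := zip c (rot 1 c).

Definition alternating (M : {set T * T}) (c : seq T) : bool :=
  cycle (fun e f : T * T => in_matching M e.1 e.2 != in_matching M f.1 f.2)
        (cycle_edges c).

Definition flat (rho : T -> nat) (c : seq T) : Prop :=
  exists n : nat, forall v, v \in c -> rho v = n \/ rho v = n.+1.

Definition no_flat_alt_cycle (rho : T -> nat) (M : {set T * T}) : Prop :=
  forall c, is_cycle c -> alternating M c -> ~ flat rho c.

Definition good_matching (rho : T -> nat) (M : {set T * T}) : Prop :=
  is_matching M /\ no_flat_alt_cycle rho M.

Variable R : numDomainType.
Variable w : T -> R.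

Definition score (s : seq T) : R := (\sum_(p <- s) w p)%R.

Definition mweight (M : {set T * T}) : R := (\sum_(e in M) w e.2)%R.

Definition is_max_score (m : R) : Prop :=
  (exists s, legal s /\ score s = m) /\ (forall s, legal s -> (score s <= m)%R).

Definition is_max_matching_weight (rho : T -> nat) (m : R) : Prop :=
  (exists M, good_matching rho M /\ mweight M = m) /\
  (forall M, good_matching rho M -> (mweight M <= m)%R).

End Taxman.

(* Main.v *)
Require Import Defs.
From mathcomp Require Import all_boot all_order all_algebra zify.
Set Implicit Arguments. Unset Strict Implicit. Unset Printing Implicit Defensive.


Lemma nextE (T : Type) (x0 x : T) s t : t < (size s).+1 ->
  nth x0 (rcons s x) t = nth x0 (x :: s) (t.+1 %% (size s).+1).
Proof.
move=> Ht; rewrite nth_rcons.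
case: (ltngtP t (size s)) => [lt_ts|//|->]; last by rewrite modnn.
  by rewrite modn_small.
by move: Ht; rewrite ltnS leqNgt => /negP.
Qed.

Lemma cycle_nthP (T : Type) (r : rel T) x0 (c : seq T) :
  cycle r c <-> forall t, t < size c -> r (nth x0 c t) (nth x0 c (t.+1 %% size c)).
Proof.
case: c => [|x s]; first by split=> // _ t; rewrite ltn0.
rewrite /cycle; split.
  move/(pathP x0) => H t Ht; have := H t; rewrite size_rcons => /(_ Ht).
  by rewrite -rcons_cons nth_rcons /= Ht -nextE.
move=> H; apply/(pathP x0) => t; rewrite size_rcons => Ht.
by rewrite -rcons_cons nth_rcons /= Ht nextE //; apply: H.
Qed.

Lemma nth_edges (T : Type) (x0 : T) (c : seq T) t : t < size c ->
  nth (x0, x0) (zip c (rot 1 c)) t = (nth x0 c t, nth x0 c (t.+1 %% size c)).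
Proof.
case: c => [|x s] //= Ht.
rewrite nth_zip; last by rewrite size_rot.
by rewrite rot1_cons nextE.
Qed.

Lemma core_contra (T : Type) (V : nat -> T) (k : nat) (m : nat -> bool)
  (up : T -> bool) (tau : T -> nat) :
  0 < k -> V k = V 0 ->
  (forall t, up (V t.+1) = ~~ up (V t)) ->
  (forall t, m t.+1 != m t) ->
  (forall t, m t -> tau (V t) = tau (V t.+1)) ->
  (forall t, ~~ m t -> if up (V t.+1) then tau (V t) < tau (V t.+1)
                       else tau (V t.+1) < tau (V t)) -> False.
Proof.
move=> k0 Vk Hup Halt Hm Hu.
pose h x := 2 * tau x + ~~ up x.
pose D t := m t == up (V t).
have DS t : D t.+1 = D t.
  by rewrite /D Hup; move: (Halt t); case: (m t); case: (m t.+1); case: (up (V t)).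
have D0 t : D t = D 0 by elim: t => // t IH; rewrite DS.
have step t : if D 0 then h (V t) < h (V t.+1) else h (V t.+1) < h (V t).
  rewrite -(D0 t) /D /h Hup.
  case E: (m t).
    by rewrite (Hm _ E); case: (up (V t)) => /=; lia.
  have := Hu t; rewrite E Hup => /(_ isT).
  by case: (up (V t)) => /=; lia.
case E0: (D 0).
  have Hg t : h (V 0) + t <= h (V t).
    elim: t => [|t IH]; first by rewrite addn0.
    have := step t; rewrite E0; lia.
  by have := Hg k; rewrite Vk; lia.
have Hg t : h (V t) + t <= h (V 0).
  elim: t => [|t IH]; first by rewrite addn0.
  have := step t; rewrite E0; lia.
by have := Hg k; rewrite Vk; lia.
Qed.


Section Game.
Variables (T : finType) (lt : rel T).
Hypotheses (irr : irreflexive lt) (tr : transitive lt).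

Lemma in_step (x : T) (S : {set T}) p : (x \in step lt S p) = [&& x \in S, x != p & ~~ lt x p].
Proof. by rewrite !inE; case: (x \in S); rewrite /= ?andbT // andbC. Qed.

Lemma step_sub (S : {set T}) p : step lt S p \subset S.
Proof. by apply/subsetP => x; rewrite in_step => /andP[]. Qed.

Lemma foldl_sub (S : {set T}) (s : seq T) : foldl (step lt) S s \subset S.
Proof.
elim: s S => [|p s IH] S /=; first exact: subxx.
exact: subset_trans (IH _) (step_sub _ _).
Qed.

Lemma state_mono (s1 s2 : seq T) : state_after lt (s1 ++ s2) \subset state_after lt s1.
Proof. by rewrite /state_after foldl_cat; apply: foldl_sub. Qed.

Lemma upclosed_foldl (S : {set T}) (s : seq T) : (forall a x, a \in S -> lt a x -> x \in S) ->
  forall a x, a \in foldl (step lt) S s -> lt a x -> x \in foldl (step lt) S s.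
Proof.
elim: s S => [|p s IH] S HS //=; apply: IH => a x.
rewrite !in_step => /and3P[aS ap nap] ax; rewrite (HS a x aS ax) /=.
apply/andP; split.
  by apply: contraNneq nap => <-.
by apply: contra nap; apply: tr.
Qed.

Lemma upclosed (s : seq T) (a x : T) : a \in state_after lt s -> lt a x -> x \in state_after lt s.
Proof. by apply: upclosed_foldl => a' x' _ _; rewrite inE. Qed.

Lemma legal_from_cat (S : {set T}) (s1 s2 : seq T) :
  legal_from lt S (s1 ++ s2) = legal_from lt S s1 && legal_from lt (foldl (step lt) S s1) s2.
Proof. by elim: s1 S => [|p s1 IH] S //=; rewrite IH andbA. Qed.

Lemma legal_from_uniq (S : {set T}) (s : seq T) : legal_from lt S s -> all (fun x => x \in S) s && uniq s.
Proof.
elim: s S => [|p s IH] S //= /andP[/andP[pS _] /IH /andP[Hall Hu]].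
rewrite pS Hu /= andbT; apply/andP; split.
  by apply/allP => x /(allP Hall); apply: (subsetP (step_sub _ _)).
by apply/negP => /(allP Hall); rewrite in_step eqxx andbF.
Qed.

Lemma legal_uniq (s : seq T) : legal lt s -> uniq s.
Proof. by move/legal_from_uniq/andP=> []. Qed.

Lemma split_index (s : seq T) p : p \in s ->
  s = take (index p s) s ++ p :: drop (index p s).+1 s.
Proof.
move=> ps; rewrite -[p in p :: _](nth_index p ps) -drop_nth ?index_mem //.
by rewrite cat_take_drop.
Qed.

Lemma legal_pick_at (s s1 : seq T) p s2 : legal lt s -> s = s1 ++ p :: s2 ->
  legal_pick lt (state_after lt s1) p.
Proof. by move=> + E; rewrite /legal E legal_from_cat /= => /andP[_ /andP[]]. Qed.

Definition St (s : seq T) j := state_after lt (take j s).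

Lemma St_mono (s : seq T) j j' : j <= j' -> St s j' \subset St s j.
Proof.
move=> le; rewrite /St -(cat_take_drop j (take j' s)) take_takel //.
exact: state_mono.
Qed.

Lemma St_succ (s : seq T) i x0 : i < size s -> St s i.+1 = step lt (St s i) (nth x0 s i).
Proof. by move=> Hi; rewrite /St (take_nth x0) // /state_after foldl_rcons. Qed.

End Game.


Lemma count_le_in (A : eqType) (P Q : pred A) (l : seq A) :
  {in l, forall x, P x -> Q x} -> count P l <= count Q l.
Proof.
elim: l => [|y l IH] sub //=.
have sub' : {in l, forall x, P x -> Q x} by move=> z zl; apply: sub; rewrite inE zl orbT.
have := IH sub'; case Py: (P y); last by case: (Q y) => /=; lia.
by rewrite (sub y (mem_head _ _) Py) /=; lia.
Qed.

Lemma count_lt (A : eqType) (P Q : pred A) (l : seq A) :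
  {in l, forall x, P x -> Q x} -> (exists2 x, x \in l & Q x && ~~ P x) ->
  count P l < count Q l.
Proof.
elim: l => [|y l IH] sub [x]; first by [].
have sub' : {in l, forall x, P x -> Q x} by move=> z zl; apply: sub; rewrite inE zl orbT.
rewrite inE => /orP[/eqP->|xl] /andP[Qx nPx] /=.
  rewrite (negbTE nPx) Qx add0n add1n ltnS; exact: count_le_in.
have := IH sub' (ex_intro2 _ _ x xl (introT andP (conj Qx nPx))).
case Py: (P y); last by case: (Q y) => /=; lia.
by rewrite (sub y (mem_head _ _) Py) /=; lia.
Qed.

Section Part2.
Variables (T : finType) (lt : rel T) (rho : T -> nat).
Hypotheses (irr : irreflexive lt) (tr : transitive lt) (gr : graded lt rho).
Variables (s : seq T) (q : T -> T).
Hypothesis (Hs : legal lt s).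
Hypothesis (Hq : forall s1 p s2, s = s1 ++ p :: s2 -> maximal_in lt (q p) (taxed lt s1 p)).

Local Notation Ss := (St lt s).
Let us : uniq s := legal_uniq Hs.

Lemma maxq p : p \in s -> maximal_in lt (q p) (taxed lt (take (index p s) s) p).
Proof. by move=> ps; apply: Hq; apply: split_index. Qed.

Lemma qp_in p : p \in s -> (q p \in Ss (index p s)) && lt (q p) p.
Proof. by move=> /maxq [] + _; rewrite inE. Qed.

Lemma p_in p : p \in s -> p \in Ss (index p s).
Proof.
move=> ps; have := legal_pick_at Hs (split_index ps).
by case/andP.
Qed.

Lemma Ss_succ p : p \in s -> Ss (index p s).+1 = step lt (Ss (index p s)) p.
Proof.
move=> ps; rewrite (St_succ _ p) ?index_mem //.
by rewrite nth_index.
Qed.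

Lemma p_out p : p \in s -> p \notin Ss (index p s).+1.
Proof. by move=> ps; rewrite Ss_succ // in_step eqxx andbF. Qed.

Lemma qp_out p : p \in s -> q p \notin Ss (index p s).+1.
Proof.
by move=> ps; rewrite Ss_succ // in_step; case/andP: (qp_in ps) => _ ->; rewrite !andbF.
Qed.

Lemma covers_q p : p \in s -> covers lt (q p) p.
Proof.
move=> ps; case/andP: (qp_in ps) => qin lqp.
rewrite /covers lqp /=; apply/forallP => x; apply/negP => /andP[lqx lxp].
have [_ Hmax] := maxq ps.
have xin : x \in taxed lt (take (index p s) s) p.
  rewrite inE lxp andbT; exact: (upclosed tr qin lqx).
by have := Hmax x xin; rewrite lqx.
Qed.

Definition matchedb v := has (fun p => (v == p) || (v == q p)) s.

Lemma time_uniq v i j : v \in Ss i -> v \notin Ss i.+1 -> v \in Ss j -> v \notin Ss j.+1 -> i = j.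
Proof.
move=> vi nvi vj nvj; case: (ltngtP i j) => // [ij|ji].
  by move: nvi; rewrite (subsetP (St_mono lt s ij) _ vj).
by move: nvj; rewrite (subsetP (St_mono lt s ji) _ vi).
Qed.

Definition tau v := count (fun j => v \in Ss j) (iota 0 (size s)).

Lemma tau_eq p : p \in s -> tau (q p) = tau p.
Proof.
move=> ps; apply: eq_in_count => j _ /=.
case: (leqP j (index p s)) => hj.
  have sub := subsetP (St_mono lt s hj).
  by rewrite (sub _ (p_in ps)) (sub _ (proj1 (andP (qp_in ps)))).
have sub := subsetP (St_mono lt s hj).
apply/idP/idP => /sub; first by rewrite (negbTE (qp_out ps)).
by rewrite (negbTE (p_out ps)).
Qed.

Let M := [set (q p, p) | p in s].

Lemma tau_lt a b : matchedb a -> matchedb b -> lt a b -> (a, b) \notin M -> tau a < tau b.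
Proof.
move=> /hasP[pa pas Ha] /hasP[pb pbs Hb] lab nM.
have lapb : lt a pb.
  case/orP: Hb => /eqP Eb; first by rewrite -Eb.
  by apply: tr lab _; rewrite Eb; case/andP: (qp_in pbs).
have inb : b \in Ss (index pb s).
  by case/orP: Hb => /eqP->; [apply: p_in | case/andP: (qp_in pbs)].
apply: count_lt.
  move=> j _ /= aj; exact: (upclosed tr aj lab).
exists (index pb s); first by rewrite mem_iota /= index_mem.
rewrite inb /=; apply/negP => ain.
have aout : a \notin Ss (index pb s).+1 by rewrite Ss_succ // in_step lapb !andbF.
have [ain' aout'] : a \in Ss (index pa s) /\ a \notin Ss (index pa s).+1.
  case/orP: Ha => /eqP->; first by split; [apply: p_in | apply: p_out].
  by split; [case/andP: (qp_in pas) | apply: qp_out].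
have Eidx := time_uniq ain' aout' ain aout.
have Epab : pa = pb by rewrite -(nth_index pa pas) -(nth_index pa pbs) Eidx.
subst pb; case/andP: (qp_in pas) => _ lqp.
case/orP: Ha => /eqP Ea; case/orP: Hb => /eqP Eb; subst a b.
- by rewrite irr in lab.
- by have := tr lab lqp; rewrite irr.
- by move: nM; rewrite imset_f.
- by rewrite irr in lab.
Qed.


Lemma is_match_help p p' : p \in s -> p' \in s -> index p s < index p' s ->
  [/\ q p != q p', q p != p', p != q p' & p != p'].
Proof.
move=> ps ps' ij.
have sub := subsetP (St_mono lt s ij).
have A1 := sub _ (p_in ps'); have A2 := sub _ (proj1 (andP (qp_in ps'))).
have B1 := p_out ps; have B2 := qp_out ps.
clear sub ij; move: (index p s).+1 A1 A2 B1 B2 => i A1 A2 B1 B2.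
split; apply/negP => /eqP E.
- by move: B2; rewrite E A2.
- by move: B2; rewrite E A1.
- by move: B1; rewrite E A2.
- by move: B1; rewrite E A1.
Qed.

Lemma is_match_M : is_matching lt M.
Proof.
split; first by move=> e /imsetP[p ps ->] /=; exact: covers_q.
move=> e f /imsetP[p ps ->] /imsetP[p' ps' ->] neq /=.
case: (ltngtP (index p s) (index p' s)) => [ij|ji|eqi].
- exact: is_match_help.
- have [h1 h2 h3 h4] := is_match_help ps' ps ji.
  by split; rewrite eq_sym.
- have Ep : p = p' by rewrite -(nth_index p ps) eqi nth_index.
  by move: neq; rewrite Ep eqxx.
Qed.

Lemma inM_matched u v : (u, v) \in M -> matchedb u && matchedb v.
Proof.
case/imsetP => p ps [-> ->]; apply/andP; split; apply/hasP; exists p => //.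
  by rewrite eqxx orbT.
by rewrite eqxx.
Qed.

Lemma inM_tau u v : (u, v) \in M -> tau u = tau v.
Proof. by case/imsetP => p ps [-> ->]; apply: tau_eq. Qed.

Lemma covers_lt a b : covers lt a b -> lt a b.
Proof. by case/andP. Qed.

Lemma no_fac_x0 (x0 : T) (c : seq T) : is_cycle lt c -> alternating M c -> ~ flat rho c.
Proof.
move=> /and3P[uc sc cc] alt [n Hn].
set k := size c.
have k0 : 0 < k by rewrite /k; lia.
pose V t := nth x0 c (t %% k).
pose m t := in_matching M (V t) (V t.+1).
pose up v := rho v == n.+1.
have VK : V k = V 0 by rewrite /V modnn mod0n.
have VD t j : V (t %% k + j) = V (t + j) by rewrite /V modnDml.
have VS t : V (t %% k).+1 = V t.+1 by rewrite -addn1 VD addn1.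
have Vk t : V (t + k) = V t by rewrite /V modnDr.
have adjV t : adj lt (V t) (V t.+1).
  have := (cycle_nthP (adj lt) x0 c).1 cc (t %% k) (ltn_pmod t k0).
  by rewrite -/k -[nth x0 c ((t %% k).+1 %% k)]/(V (t %% k).+1) VS.
have altV t : m t.+1 != m t.
  have Hsz : size (cycle_edges c) = k by rewrite /cycle_edges size_zip size_rot minnn.
  have := (cycle_nthP _ (x0, x0) (cycle_edges c)).1 alt (t %% k).
  rewrite Hsz => /(_ (ltn_pmod t k0)).
  rewrite /cycle_edges !nth_edges -/k ?ltn_pmod //.
  rewrite -[nth x0 c ((t %% k).+1 %% k)]/(V (t %% k).+1) VS.
  rewrite -[nth x0 c (((t %% k).+1 %% k).+1 %% k)]/(V ((t %% k).+1 %% k).+1) VS.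
  by have e := VD t 2; rewrite !addn2 in e; rewrite e /= eq_sym.
have flatV t : rho (V t) = n \/ rho (V t) = n.+1.
  by apply: Hn; apply: mem_nth; apply: ltn_pmod.
have rkV t : rho (V t.+1) = (rho (V t)).+1 \/ rho (V t) = (rho (V t.+1)).+1.
  by case/orP: (adjV t) => /(proj2 gr) ->; [left|right].
have upV t : up (V t.+1) = ~~ up (V t).
  rewrite /up; have := flatV t; have := flatV t.+1; have := rkV t.
  case: (rho (V t)) => [|a]; case: (rho (V t.+1)) => [|b]; rewrite ?eqSS; lia.
have mM t : m t -> matchedb (V t) && matchedb (V t.+1).
  by case/orP => /inM_matched //; rewrite andbC.
have Vmatched t : matchedb (V t).
  case E: (m t); first by case/andP: (mM t E).
  have tk : 0 < t + k by lia.
  have := altV (t + k).-1; rewrite prednK // /m Vk -addSn Vk -/(m t) E /=.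
  have := mM (t + k).-1; rewrite /m prednK // Vk => H1 H2.
  by move: H2 H1; case: (in_matching M _ _) => // _ H1; case/andP: (H1 isT).
have covdir u v : adj lt u v -> rho v = (rho u).+1 -> lt u v.
  case/orP=> /[dup] cv /(proj2 gr) E; first by move=> _; exact: covers_lt.
  by rewrite E; lia.
apply: (core_contra (V := V) (k := k) (m := m) (up := up) (tau := tau)) => //.
- by move=> t /orP[/inM_tau|/inM_tau] ->.
- move=> t nm; move: nm; rewrite /m /in_matching negb_or => /andP[n1 n2].
  case U: (up (V t.+1)).
    have U' : up (V t) = false by rewrite -[up (V t)]negbK -upV U.
    have r1 : rho (V t.+1) = (rho (V t)).+1.
      by move: U U'; rewrite /up; have := flatV t; have := flatV t.+1; lia.
    exact: tau_lt (Vmatched t) (Vmatched t.+1) (covdir _ _ (adjV t) r1) n1.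
  have U' : up (V t) = true by rewrite -[up (V t)]negbK -upV U.
  have r1 : rho (V t) = (rho (V t.+1)).+1.
    by move: U U'; rewrite /up; have := flatV t; have := flatV t.+1; lia.
  have a' : adj lt (V t.+1) (V t) by rewrite /adj orbC; exact: adjV.
  exact: tau_lt (Vmatched t.+1) (Vmatched t) (covdir _ _ a' r1) n2.
Qed.

Lemma no_fac_M : no_flat_alt_cycle lt rho M.
Proof. by move=> [|x0 c']; [case/and3P | exact: no_fac_x0]. Qed.

Lemma mweight_M (R : numDomainType) (w : T -> R) : mweight w M = score w s.
Proof.
rewrite /mweight /score big_imset /=; last by move=> x y _ _ [].
by rewrite big_uniq.
Qed.

End Part2.


Lemma decomp t m : t < m.*2 -> exists2 l, l < m & (t = l.*2) \/ (t = (l.*2).+1).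
Proof.
move=> Ht; exists t./2; have := odd_double_half t; case: (odd t) => /= E.
- rewrite -mul2n in E Ht; lia.
- rewrite -mul2n in E Ht; lia.
- by right.
- by left.
Qed.

Section Part3.
Variables (T : finType) (lt : rel T) (rho : T -> nat).
Hypotheses (irr : irreflexive lt) (tr : transitive lt) (gr : graded lt rho).
Variable (M : {set T * T}).
Hypothesis (HM : good_matching lt rho M).

Lemma covers_of_lt a b : lt a b -> rho b = (rho a).+1 -> covers lt a b.
Proof.
move=> lab E; rewrite /covers lab /=; apply/forallP => x; apply/negP => /andP[h1 h2].
have := (proj1 gr) _ _ h1; have := (proj1 gr) _ _ h2; lia.
Qed.

Lemma Mcov e : e \in M -> covers lt e.1 e.2.
Proof. by case: HM => [[H _] _]; apply: H. Qed.

Lemma Mdisj e f : e \in M -> f \in M -> e != f ->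
  [/\ e.1 != f.1, e.1 != f.2, e.2 != f.1 & e.2 != f.2].
Proof. by case: HM => [[_ H] _]; apply: H. Qed.

Lemma build_cycle (A : seq (T * T)) e0 n :
  uniq A -> 1 < size A ->
  (forall l, l < size A ->
     [&& nth e0 A l \in M, nth e0 A (l.+1 %% size A) \in M,
         nth e0 A l != nth e0 A (l.+1 %% size A) &
         lt (nth e0 A l).1 (nth e0 A (l.+1 %% size A)).2]) ->
  (forall l, l < size A -> rho (nth e0 A l).1 = n) -> False.
Proof.
move=> uA sA HA Hr.
set m := size A in sA HA Hr.
pose Ae l := nth e0 A l.
pose fc t := if odd t then (Ae t./2).1 else (Ae t./2).2.
pose K := m.*2.
pose c := mkseq fc K.
have fcE l : fc l.*2 = (Ae l).2 by rewrite /fc odd_double doubleK.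
have fcO l : fc (l.*2).+1 = (Ae l).1 by rewrite /fc /= odd_double /= uphalf_double.
have AM l : l < m -> Ae l \in M by move=> /HA /and4P[].
have Acov l : l < m -> covers lt (Ae l).1 (Ae l).2 by move=> /AM /Mcov.
have Ar2 l : l < m -> rho (Ae l).2 = n.+1.
  by move=> lm; rewrite ((proj2 gr) _ _ (Acov l lm)) Hr.
have m0 : 0 < m by lia.
have nxtE l : l < m -> ((l.*2).+1).+1 %% K = ((l.+1) %% m).*2.
  by move=> lm; rewrite /K -!mul2n muln_modr; congr (_ %% _); lia.
have nxtE2 l : l < m -> (l.*2).+1 %% K = (l.*2).+1.
  by move=> lm; rewrite modn_small // /K -!mul2n; lia.
have lmod l : l.+1 %% m < m by apply: ltn_pmod.
have szc : size c = K by rewrite size_mkseq.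
have nthc t : t < K -> nth (Ae 0).1 c t = fc t by move=> tK; rewrite nth_mkseq.
have Kpos : 0 < K by rewrite /K -mul2n; lia.
have ltK t : t.+1 %% K < K by apply: ltn_pmod.
have flat_c : flat rho c.
  exists n => v /mapP[t]; rewrite mem_iota add0n => /= tK ->.
  have [l lm [->|->]] := decomp tK.
    by rewrite fcE Ar2 //; right.
  by rewrite fcO Hr //; left.
have uc : uniq c.
  apply/mkseq_uniqP => t t'; rewrite !inE /= => tK t'K.
  have [l lm [->|->]] := decomp tK; have [l' lm' [->|->]] := decomp t'K;
    rewrite ?fcE ?fcO => E.
  - case: (eqVneq (Ae l) (Ae l')) => [Eq|ne].
      by move/eqP: Eq; rewrite /Ae nth_uniq // => /eqP->.
    by have [_ _ _ /eqP] := Mdisj (AM l lm) (AM l' lm') ne.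
  - case: (eqVneq (Ae l) (Ae l')) => [Eq|ne].
      by rewrite Eq in E; have := Acov l' lm'; rewrite E => /andP[]; rewrite irr.
    by have [_ _ /eqP] := Mdisj (AM l lm) (AM l' lm') ne.
  - case: (eqVneq (Ae l) (Ae l')) => [Eq|ne].
      by rewrite Eq in E; have := Acov l' lm'; rewrite E => /andP[]; rewrite irr.
    by have [_ /eqP] := Mdisj (AM l lm) (AM l' lm') ne.
  - case: (eqVneq (Ae l) (Ae l')) => [Eq|ne].
      by move/eqP: Eq; rewrite /Ae nth_uniq // => /eqP->.
    by have [/eqP] := Mdisj (AM l lm) (AM l' lm') ne.
have cc : cycle (adj lt) c.
  apply/(cycle_nthP _ (Ae 0).1) => t; rewrite szc => tK.
  rewrite !nthc //.
  have [l lm [->|->]] := decomp tK.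
    rewrite -addn1 (addn1 l.*2) nxtE2 // fcE fcO /adj.
    by rewrite (Acov l lm) orbT.
  rewrite nxtE // fcE fcO /adj.
  have := HA l lm => /and4P[_ _ _ hlt].
  by rewrite covers_of_lt // Ar2 // Hr.
have alt : alternating M c.
  have Hsz : size (cycle_edges c) = K by rewrite /cycle_edges size_zip size_rot minnn szc.
  have B t : t < K -> in_matching M (fc t) (fc (t.+1 %% K)) = ~~ odd t.
    move=> tK; have [l lm [->|->]] := decomp tK.
      rewrite nxtE2 // fcE fcO odd_double /in_matching.
      by rewrite -surjective_pairing (AM l lm) orbT.
    rewrite nxtE // fcE fcO /= odd_double /in_matching /=.
    have := HA l lm => /and4P[_ _ ne hlt].
    apply/negP => /orP[inM|inM].
      case: (eqVneq ((Ae l).1, (Ae (l.+1 %% m)).2) (Ae l)) => [Eq|ne2].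
        have [_ _ _ /eqP] := Mdisj (AM l lm) (AM _ (lmod l)) ne.
        by apply; rewrite -[in LHS]Eq.
      by have [/eqP] := Mdisj inM (AM l lm) ne2.
    have := (proj2 gr) _ _ (Mcov inM); rewrite /= Ar2 // Hr //; lia.
  apply/(cycle_nthP _ ((Ae 0).1, (Ae 0).1)) => t; rewrite Hsz => tK.
  rewrite /cycle_edges !nth_edges ?szc ?ltK // /= !nthc ?ltK //.
  rewrite !B ?ltK // odd_mod; last by rewrite /K odd_double.
  by rewrite /= negbK; case: (odd t).
apply: ((proj2 HM) c _ alt flat_c).
by rewrite /is_cycle uc cc szc /K -mul2n; apply/andP; split => //; lia.
Qed.


Lemma exists_min (X : {set T * T}) : X \subset M -> X != set0 ->
  exists2 f, f \in X & forall e, e \in X -> e != f -> ~~ lt e.1 f.2.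
Proof.
move=> XM /set0Pn[f0 f0X].
case: (arg_minnP (fun e : T * T => rho e.1) f0X) => fm fmX fmmin.
set n := rho fm.1.
pose Y := [set e in X | rho e.1 == n].
pose r' := fun e f : T * T => [&& e \in Y, f \in Y, e != f & lt e.1 f.2].
suff [f fY Hf] : exists2 f, f \in Y & forall e, ~~ r' e f.
  exists f; first by move: fY; rewrite inE => /andP[].
  move=> e eX nef; apply/negP => lef.
  have fX : f \in X by move: fY; rewrite inE => /andP[].
  have /eqP fn : rho f.1 == n by move: fY; rewrite inE => /andP[].
  have r2 := (proj2 gr) _ _ (Mcov (subsetP XM _ fX)).
  have := (proj1 gr) _ _ lef; rewrite r2 fn => h1.
  have h2 := fmmin e eX.
  have eY : e \in Y by rewrite inE eX /=; apply/eqP; rewrite -/n in h2; lia.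
  by have := Hf e; rewrite /r' eY fY nef lef.
have fmY : fm \in Y by rewrite inE eqxx andbT; exact: fmX.
case: (boolP [exists f in Y, [forall e, ~~ r' e f]]) => [/existsP[f /andP[fY /forallP Hf]]|nE].
  by exists f.
have Hpred f : f \in Y -> exists e, r' e f.
  move=> fY; case: (boolP [exists e, r' e f]) => [/existsP//|nf].
  move/negP: nE; case; apply/existsP; exists f; rewrite fY /=.
  apply/forallP => e; apply: contra nf => h; apply/existsP; by exists e.
pose Anc f := [set e | connect r' e f].
case: (arg_minnP (fun f => #|Anc f|) fmY) => f1 f1Y f1min.
have [p rpf] := Hpred f1 f1Y.
have pY : p \in Y by case/and4P: rpf.
have sub : Anc p \subset Anc f1.
  apply/subsetP => e; rewrite !inE => h; apply: connect_trans h (connect1 rpf).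
have EA : Anc p = Anc f1.
  by apply/eqP; rewrite eqEcard sub /=; apply: f1min.
have : f1 \in Anc p by rewrite EA inE connect0.
rewrite inE => /connectP[l pl El].
move: El; case: (shortenP pl) => l' pl' ul' _ El'.
have cyc : cycle r' (f1 :: l') by rewrite /cycle rcons_path pl' -El'.
have sA : 1 < size (f1 :: l').
  case: l' pl' ul' El' cyc => [|x l''] //= _ _ E; move: rpf.
  by rewrite -E /r' eqxx !andbF.
have HA := (cycle_nthP r' f1 (f1 :: l')).1 cyc.
apply: False_ind; apply: (build_cycle (A := f1 :: l') (e0 := f1) (n := n)) => //.
  move=> i iA; case/and4P: (HA i iA) => h1 h2 h3 h4.
  move: h1 h2; rewrite !inE => /andP[h1 _] /andP[h2 _].
  by rewrite (subsetP XM _ h1) (subsetP XM _ h2) h3 h4.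
move=> i iA; case/and4P: (HA i iA) => h1 _ _ _.
by move: h1; rewrite inE => /andP[_ /eqP].
Qed.

Definition rel_before (f e : T * T) := ~~ lt e.1 f.2.

Lemma topo (X : {set T * T}) : X \subset M ->
  exists2 L : seq (T * T), perm_eq L (enum X) & pairwise rel_before L.
Proof.
have [k Hk] : exists k, #|X| <= k by exists #|X|.
elim: k X Hk => [|k IH] X Hk XM.
  exists [::] => //; move: Hk; rewrite leqn0 cards_eq0 => /eqP->.
  by rewrite enum_set0.
case: (eqVneq X set0) => [->|X0].
  by exists [::] => //; rewrite enum_set0.
have [f fX Hf] := exists_min XM X0.
have Hk' : #|X :\ f| <= k by move: Hk; rewrite (cardsD1 f X) fX add1n ltnS.
have [L' pL' pwL'] := IH _ Hk' (subset_trans (subD1set X f) XM).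
exists (f :: L').
  apply: uniq_perm; last by move=> x; rewrite inE (perm_mem pL') !mem_enum !inE; case: eqP => // ->.
    rewrite /= (perm_uniq pL') enum_uniq andbT (perm_mem pL') mem_enum !inE eqxx //.
  exact: enum_uniq.
rewrite pairwise_cons pwL' andbT; apply/allP => e.
rewrite (perm_mem pL') mem_enum !inE => /andP[nef eX].
exact: Hf.
Qed.

Lemma legal_of (L : seq (T * T)) (S : {set T}) :
  uniq L -> {subset L <= M} -> pairwise rel_before L ->
  (forall e, e \in L -> (e.1 \in S) && (e.2 \in S)) -> legal_from lt S (map snd L).
Proof.
elim: L S => [|f L IH] S //= /andP[nfL uL] LM /andP[/allP Hall pw] HS.
have fM : f \in M by apply: LM; rewrite inE eqxx.
have /andP[f1S f2S] := HS f (mem_head _ _).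
apply/andP; split.
  rewrite /legal_pick f2S /=; apply/existsP; exists f.1; rewrite f1S /=.
  exact: covers_lt (Mcov fM).
apply: IH => //; first by move=> x xL; apply: LM; rewrite inE xL orbT.
move=> e eL.
have eM : e \in M by apply: LM; rewrite inE eL orbT.
have nef : e != f by apply: contraNneq nfL => <-.
have [_ h2 _ h4] := Mdisj eM fM nef.
have /andP[e1S e2S] : (e.1 \in S) && (e.2 \in S) by apply: HS; rewrite inE eL orbT.
have nl1 : ~~ lt e.1 f.2 := Hall e eL.
rewrite !in_step e1S e2S h2 h4 nl1 /=.
apply: contra nl1 => h; apply: tr h; exact: covers_lt (Mcov eM).
Qed.

Lemma part3 (R : numDomainType) (w : T -> R) :
  exists s : seq T, [/\ legal lt s, perm_eq s [seq e.2 | e <- enum M]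
                      & score w s = mweight w M].
Proof.
have [L pL pw] := topo (subxx M).
exists (map snd L); split.
- apply: legal_of => //.
  + by rewrite (perm_uniq pL) enum_uniq.
  + by move=> e; rewrite (perm_mem pL) mem_enum.
  + by move=> e _; rewrite !inE.
- exact: perm_map.
- by rewrite /score /mweight big_map (perm_big _ pL) big_enum.
Qed.

End Part3.

Import Order.TTheory GRing.Theory Num.Theory.

Lemma exists_q (T : finType) (lt : rel T) (rho : T -> nat) :
  irreflexive lt -> transitive lt -> graded lt rho ->
  forall s, legal lt s -> exists q : T -> T,
    forall s1 p s2, s = s1 ++ p :: s2 -> maximal_in lt (q p) (taxed lt s1 p).
Proof.
move=> irr tr gr s Hs.
pose X p := taxed lt (take (index p s) s) p.
exists (fun p => odflt p [pick a in X p | [forall b in X p, ~~ lt a b]]).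
move=> s1 p s2 E.
have us := legal_uniq Hs.
have ps1 : p \notin s1.
  by move: us; rewrite E cat_uniq /= => /and3P[_ /norP[]].
have EX : X p = taxed lt s1 p.
  by rewrite /X E index_cat (negbTE ps1) /= eqxx addn0 take_size_cat.
rewrite EX.
have [q0 q0S lq0p] : exists2 q0, q0 \in state_after lt s1 & lt q0 p.
  by have := legal_pick_at Hs E => /andP[_ /existsP[q0 /andP[h1 h2]]]; exists q0.
have q0X : q0 \in taxed lt s1 p by rewrite inE q0S lq0p.
case: (arg_maxnP rho q0X) => a aX amax.
case: pickP => [b /andP[bX /forallP Hb]|none] /=.
  split => // c cX; have := Hb c; rewrite cX.
  by [].
exfalso; have := none a; have -> : (a \in taxed lt s1 p) = true by exact: aX.
move=> /= /negbT /negP; apply.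
apply/forallP => c; apply/implyP => cX; apply/negP => lac.
have := (proj1 gr) _ _ lac; have := amax c cX; lia.
Qed.

Unset Implicit Arguments.
Import Order.TTheory GRing.Theory Num.Theory.

Theorem theorem1 (R : realFieldType) (T : finType) (lt : rel T)
    (rho : T -> nat) (w : T -> R) :
  irreflexive lt -> transitive lt -> graded lt rho ->
  [/\ (* maximum score = maximum weight of a flat-alternating-cycle-free matching *)
      (forall m : R, is_max_score lt w m <-> is_max_matching_weight lt w rho m),
      (* from a legal move sequence with any choice of maximal taxed elements q *)
      (forall (s : seq T) (q : T -> T), legal lt s ->
         (forall s1 p s2, s = s1 ++ p :: s2 -> maximal_in lt (q p) (taxed lt s1 p)) ->
         [/\ good_matching lt rho [set (q p, p) | p in s],
             (forall p, p \in s -> covers lt (q p) p)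
           & mweight w [set (q p, p) | p in s] = score w s])
    & (* conversely, every such matching comes from a legal move sequence *)
      (forall M : {set T * T}, good_matching lt rho M ->
         exists s : seq T, [/\ legal lt s, perm_eq s [seq e.2 | e <- enum M]
                             & score w s = mweight w M])].
Proof.
move=> irr tr gr.
have P2 : forall (s : seq T) (q : T -> T), legal lt s ->
         (forall s1 p s2, s = s1 ++ p :: s2 -> maximal_in lt (q p) (taxed lt s1 p)) ->
         [/\ good_matching lt rho [set (q p, p) | p in s],
             (forall p, p \in s -> covers lt (q p) p)
           & mweight w [set (q p, p) | p in s] = score w s].
  move=> s q Hs Hq; split.
  - split; first exact: (is_match_M tr Hs Hq).
    exact: (no_fac_M irr tr gr Hs Hq).
  - move=> p ps; exact: (covers_q tr Hq ps).
  - exact: (mweight_M q Hs w).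
have P3 : forall M : {set T * T}, good_matching lt rho M ->
         exists s : seq T, [/\ legal lt s, perm_eq s [seq e.2 | e <- enum M]
                             & score w s = mweight w M].
  by move=> M HM; apply: (part3 irr tr gr HM w).
have A s : legal lt s -> exists M, good_matching lt rho M /\ mweight w M = score w s.
  move=> Hs; have [q Hq] := exists_q irr tr gr Hs.
  by have [H1 _ H3] := P2 s q Hs Hq; exists [set (q p, p) | p in s].
have B M : good_matching lt rho M -> exists s, legal lt s /\ score w s = mweight w M.
  by move=> HM; have [s [H1 _ H3]] := P3 M HM; exists s.
split => //; move=> m; split.
- move=> [[s [Hs Es]] Hmax]; split.
    by have [M [HM EM]] := A s Hs; exists M; rewrite EM.
  by move=> M HM; have [s0 [Hs0 <-]] := B M HM; apply: Hmax.
- move=> [[M [HM EM]] Hmax]; split.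
    by have [s [Hs Es]] := B M HM; exists s; rewrite Es.
  by move=> s Hs; have [M0 [HM0 <-]] := A s Hs; apply: Hmax.
Qed.
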